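(* Suppose each $X_k$ is a partially ordered set, and $f\colon\prod_{i\in[n]}X_i\to Y$ satisfies condition (BC) and is order-preserving with respect to the componentwise order. Then each $\Phi_k^-$ and $\Phi_k^+$ ($k\in[n]$) is order-preserving. Consequently, if moreover $f$ is a pseudo-polynomial function, then there exist a polynomial function $p\colon Y^n\to Y$ and order-preserving maps $\varphi_k\colon X_k\to Y$ satisfying the boundary condition such that $f(\mathbf{x})=p(\varphi_1(x_1),\ldots,\varphi_n(x_n))$ for all $\mathbf{x}$.
   Context: $Y$ is a finite distributive lattice identified with a sublattice of $\mathcal{P}(U)$ for a finite set $U$, with least element $0=\emptyset$, greatest element $1=U$, and $\wedge,\vee$ being intersection and union; $\overline{S}=U\setminus S$. For $S\subseteq U$, $\operatorname{cl}(S)=\bigwedge\{y\in Y: y\ge S\}$, $\operatorname{int}(S)=\bigvee\{y\in Y: y\le S\}$. $[n]=\{1,\ldots,n\}$; $X_1,\ldots,X_n$ are sets with at least two elements, each with two fixed distinct elements $0_{X_k},1_{X_k}$ (written $0,1$). For $\mathbf{x}\in\prod_i X_i$ and $a\in X_k$, $\mathbf{x}_k^a$ is $\mathbf{x}$ with $k$-th component replaced by $a$. A map $\varphi_k\colon X_k\to Y$ satisfies the boundary condition if $\varphi_k(0_{X_k})\le\varphi_k(x_k)\le\varphi_k(1_{X_k})$ for all $x_k$. A polynomial function $Y^n\to Y$ is a composition of $\wedge,\vee$ with variables and constants. $f$ is a pseudo-polynomial function if $f(\mathbf{x})=p(\varphi_1(x_1),\ldots,\varphi_n(x_n))$ for some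 polynomial function $p$ and maps $\varphi_k$ satisfying the boundary condition. Condition (BC): $f(\mathbf{x}_k^0)\le f(\mathbf{x})\le f(\mathbf{x}_k^1)$ for all $k$ and $\mathbf{x}$. For $k\in[n]$, $a_k\in X_k$: $$\Phi_k^-(a_k)=\bigvee_{\mathbf{x}:\,x_k=a_k}\operatorname{cl}\big(f(\mathbf{x})\wedge\overline{f(\mathbf{x}_k^0)}\big),\qquad \Phi_k^+(a_k)=\bigwedge_{\mathbf{x}:\,x_k=a_k}\operatorname{int}\big(f(\mathbf{x})\vee\overline{f(\mathbf{x}_k^1)}\big),$$ ranging over all $\mathbf{x}$ with $k$-th component $a_k$. *)

(* Defs.v *)
From HB Require Import structures.
From mathcomp Require Import all_boot all_order.
From Stdlib Require Import ClassicalDescription.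
Set Implicit Arguments. Unset Strict Implicit. Unset Printing Implicit Defensive.
Import Order.TTheory.

(* A Prop turned into a bool (classically), used to form arbitrary
   unions / intersections of subsets of the finite set U. *)
Definition asb (P : Prop) : bool :=
  if excluded_middle_informative P then true else false.

Section Defs.
Variable U : finType.

Definition set_lattice (Y : {set {set U}}) : Prop :=
  [/\ set0 \in Y, setT \in Y,
      (forall a b, a \in Y -> b \in Y -> a :&: b \in Y) &
      (forall a b, a \in Y -> b \in Y -> a :|: b \in Y)].

Definition cl (Y : {set {set U}}) (S : {set U}) : {set U} :=
  \bigcap_(y in Y | S \subset y) y.
Definition int (Y : {set {set U}}) (S : {set U}) : {set U} :=
  \bigcup_(y in Y | y \subset S) y.

Inductive lterm (n : nat) : Type :=
| LVar of 'I_n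
| LConst of {set U}
| LMeet of lterm n & lterm n
| LJoin of lterm n & lterm n.

Fixpoint leval n (t : lterm n) (v : 'I_n -> {set U}) : {set U} :=
  match t with
  | LVar i => v i
  | LConst c => c
  | LMeet t1 t2 => leval t1 v :&: leval t2 v
  | LJoin t1 t2 => leval t1 v :|: leval t2 v
  end.

Fixpoint consts_in n (Y : {set {set U}}) (t : lterm n) : Prop :=
  match t with
  | LVar _ => True
  | LConst c => c \in Y
  | LMeet t1 t2 => consts_in Y t1 /\ consts_in Y t2
  | LJoin t1 t2 => consts_in Y t1 /\ consts_in Y t2
  end.

Variables (n : nat) (X : 'I_n -> Type) (z o : forall i, X i).

Definition upd (x : forall i, X i) (k : 'I_n) (a : X k) : forall i, X i :=
  dfwith x a.

Definition boundary (phi : forall k, X k -> {set U}) : Prop :=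
  forall k a, phi k (z k) \subset phi k a /\ phi k a \subset phi k (o k).

Definition pseudo_polynomial (Y : {set {set U}}) (f : (forall i, X i) -> {set U}) : Prop :=
  exists (t : lterm n) (phi : forall k, X k -> {set U}),
    [/\ consts_in Y t, (forall k a, phi k a \in Y), boundary phi &
        forall x, f x = leval t (fun k => phi k (x k))].

Definition BC (f : (forall i, X i) -> {set U}) : Prop :=
  forall k x, f (upd x (z k)) \subset f x /\ f x \subset f (upd x (o k)).

(* Phi_k^-(a) = join over x with x_k = a of cl(f x /\ ~ f(x_k^0)) *)
Definition Phim (Y : {set {set U}}) (f : (forall i, X i) -> {set U}) (k : 'I_n) (a : X k)
  : {set U} :=
  [set u | asb (exists x : forall i, X i,
                  x k = a /\ u \in cl Y (f x :&: ~: f (upd x (z k))))].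

(* Phi_k^+(a) = meet over x with x_k = a of int(f x \/ ~ f(x_k^1)) *)
Definition Phip (Y : {set {set U}}) (f : (forall i, X i) -> {set U}) (k : 'I_n) (a : X k)
  : {set U} :=
  [set u | asb (forall x : forall i, X i,
                  x k = a -> u \in int Y (f x :|: ~: f (upd x (o k))))].
End Defs.

(* Main.v *)
Require Import Defs.
From HB Require Import structures.
From mathcomp Require Import all_boot all_order.
From Stdlib Require Import ClassicalDescription ClassicalEpsilon.
Import Order.TTheory.
Local Open Scope order_scope.
Set Implicit Arguments. Unset Strict Implicit.

Lemma asbP (P : Prop) : asb P <-> P.
Proof. unfold asb; case: (ClassicalDescription.excluded_middle_informative P) => [p|np] /=; split => //; move=> h; exfalso; auto. Qed.

Lemma cl_mono (U : finType) (Y : {set {set U}}) (S S' : {set U}) :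
  S \subset S' -> cl Y S \subset cl Y S'.
Proof.
move=> SS; apply/bigcapsP => y /andP[yY Sy]; apply: bigcap_inf.
by rewrite yY (subset_trans SS Sy).
Qed.

Lemma int_mono (U : finType) (Y : {set {set U}}) (S S' : {set U}) :
  S \subset S' -> int Y S \subset int Y S'.
Proof.
move=> SS; apply/bigcupsP => y /andP[yY Sy]; apply: bigcup_sup.
by rewrite yY (subset_trans Sy SS).
Qed.

Lemma leval_mono (U : finType) n (t : lterm U n) (v w : 'I_n -> {set U}) :
  (forall k, v k \subset w k) -> leval t v \subset leval t w.
Proof.
move=> H; elim: t => [i|c|t1 I1 t2 I2|t1 I1 t2 I2] //=.
- exact: setISS.
- exact: setUSS.
Qed.

Lemma leval_mem (U : finType) n (t : lterm U n) (v w : 'I_n -> {set U}) u :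
  (forall k, (u \in v k) = (u \in w k)) -> (u \in leval t v) = (u \in leval t w).
Proof.
move=> H; elim: t => [i|c|t1 I1 t2 I2|t1 I1 t2 I2] //=.
- by rewrite !inE I1 I2.
- by rewrite !inE I1 I2.
Qed.

Section Main.
Variables (U : finType) (Y : {set {set U}}) (n : nat)
  (d : Order.disp_t) (X : 'I_n -> porderType d)
  (z o : forall i, X i)
  (f : (forall i, X i) -> {set U})
  (fBC : BC z o f)
  (fmono : forall x y : forall i, X i, (forall i, x i <= y i) -> f x \subset f y).

Lemma feq (x y : forall i, X i) : (forall i, x i = y i) -> f x = f y.
Proof.
move=> H; apply/eqP; rewrite eqEsubset !fmono // => i; by rewrite H.
Qed.

Lemma upd_upd (x : forall i, X i) k (a b : X k) i : upd (upd x a) b i = upd x b i.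
Proof.
rewrite /upd; case: (eqVneq k i) => [<-|ne]; first by rewrite !dfwith_in.
by rewrite !dfwith_out.
Qed.

Lemma upd_le (x : forall i, X i) k (a b : X k) i : a <= b -> upd x a i <= upd x b i.
Proof.
rewrite /upd => ab; case: (eqVneq k i) => [<-|ne]; first by rewrite !dfwith_in.
by rewrite !dfwith_out.
Qed.

Lemma upd_self (x : forall i, X i) k i : upd x (x k) i = x i.
Proof.
rewrite /upd; case: (eqVneq k i) => [<-|ne]; first by rewrite !dfwith_in.
by rewrite !dfwith_out.
Qed.

Definition pre {k} (b a : X k) : Prop := forall x, f (upd x b) \subset f (upd x a).

Lemma pre_refl k (a : X k) : pre a a. Proof. by move=> x. Qed.
Lemma pre_trans k (a b c : X k) : pre a b -> pre b c -> pre a c.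
Proof. by move=> H1 H2 x; exact: subset_trans (H1 x) (H2 x). Qed.
Lemma pre_le k (a b : X k) : a <= b -> pre a b.
Proof. by move=> ab x; apply: fmono => i; apply: upd_le. Qed.
Lemma pre_z k (a : X k) : pre (z k) a.
Proof.
move=> x; have [H _] := fBC k (upd x a).
by rewrite -(feq (upd_upd x a (z k))).
Qed.
Lemma pre_o k (a : X k) : pre a (o k).
Proof.
move=> x; have [_ H] := fBC k (upd x a).
by rewrite -(feq (upd_upd x a (o k))).
Qed.

Lemma chain (y x : forall i, X i) : (forall k, pre (y k) (x k)) -> f y \subset f x.
Proof.
move=> H.
pose w (m : nat) : forall i, X i := fun i => if (i < m)%N then x i else y i.
suff: forall m, (m <= n)%N -> f y \subset f (w m).
  move/(_ n (leqnn n)); rewrite (@feq (w n) x) // => i; by rewrite /w ltn_ord.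
elim => [_|m IH mn].
  by rewrite (@feq (w 0%N) y) // => i; rewrite /w ltn0.
apply: subset_trans (IH (ltnW mn)) _.
pose mo := Ordinal mn.
have E1 : forall i, w m i = upd (w m) (y mo) i.
  move=> i; rewrite /upd; case: (eqVneq mo i) => [<-|ne].
    by rewrite dfwith_in /w ltnn.
  by rewrite dfwith_out.
have E2 : forall i, w m.+1 i = upd (w m) (x mo) i.
  move=> i; rewrite /upd; case: (eqVneq mo i) => [<-|ne].
    by rewrite dfwith_in /w ltnSn.
  rewrite dfwith_out // /w ltnS leq_eqVlt.
  have -> : (i == m :> nat) = false.
    by apply/negP => /eqP ei; move: ne; rewrite eq_sym; apply/negP/negPn/eqP/val_inj.
  done.
by rewrite (feq E1) (feq E2); apply: H.
Qed.

End Main.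

Theorem mainTheorem10 (U : finType) (Y : {set {set U}}) (n : nat)
  (d : Order.disp_t) (X : 'I_n -> porderType d)
  (z o : forall i, X i) (zo : forall i, z i <> o i)
  (f : (forall i, X i) -> {set U})
  (HY : set_lattice Y)
  (fY : forall x, f x \in Y)
  (fBC : BC z o f)
  (fmono : forall x y : forall i, X i, (forall i, x i <= y i) -> f x \subset f y) :
  (forall (k : 'I_n) (a b : X k), a <= b ->
     Phim z Y f a \subset Phim z Y f b /\ Phip o Y f a \subset Phip o Y f b) /\
  (pseudo_polynomial z o Y f ->
     exists (t : lterm U n) (phi : forall k, X k -> {set U}),
       [/\ consts_in Y t, (forall k a, phi k a \in Y), boundary z o phi,
           (forall k (a b : X k), a <= b -> phi k a \subset phi k b) &
           forall x, f x = leval t (fun k => phi k (x k))]).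
Proof.
have feq' : forall x y : forall i, X i, (forall i, x i = y i) -> f x = f y by move=> x y H; apply: feq.
split.
  move=> k a b ab; split; apply/subsetP => u; rewrite !inE => /asbP.
    case=> x [xk ux]; apply/asbP; exists (upd x b); split; first by rewrite /upd dfwith_in.
    apply: (subsetP (cl_mono _ _)) ux; apply: setISS.
      by apply: fmono => i; rewrite -(upd_self x k i) xk; apply: upd_le.
    by rewrite (feq' _ _ (upd_upd x b (z k))).
  move=> H; apply/asbP => x xk.
  have := H (upd x a); rewrite /upd dfwith_in => /(_ erefl).
  apply: (subsetP (int_mono _ _)); apply: setUSS.
    by apply: fmono => i; rewrite -(upd_self x k i) xk; apply: upd_le.
  by rewrite (feq' _ _ (upd_upd x a (o k))).
case=> t [phi [ct phiY bnd feqn]].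
case: HY => Y0 _ _ YU.
pose psi k (a : X k) := \bigcup_(y in Y | asb (exists b, pre f b a /\ phi k b = y)) y.
have psiP : forall k a u, u \in psi k a <-> exists b, pre f b a /\ u \in phi k b.
  move=> k a u; split.
    by case/bigcupP => y /andP[_ /asbP [b [pb <-]]] uy; exists b.
  case=> b [pb ub]; apply/bigcupP; exists (phi k b) => //.
  by rewrite phiY; apply/asbP; exists b.
have psi_mono : forall k (a b : X k), pre f a b -> psi k a \subset psi k b.
  move=> k a b ab; apply/subsetP => u /psiP [c [pc uc]]; apply/psiP.
  by exists c; split => //; apply: pre_trans pc ab.
have phi_psi : forall k a, phi k a \subset psi k a.
  by move=> k a; apply/subsetP => u ua; apply/psiP; exists a; split => //; apply: pre_refl.
exists t, psi; split => //.
- move=> k a; apply: (big_ind (fun s : {set U} => s \in Y)) => //.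
  by move=> y /andP[].
- move=> k a; split; apply: psi_mono; [apply: pre_z | apply: pre_o] => //.
- move=> k a b ab; apply: psi_mono; exact: pre_le.
move=> x; apply/eqP; rewrite eqEsubset; apply/andP; split.
  by rewrite feqn; apply: leval_mono => k.
apply/subsetP => u uin.
have H : forall k, exists c, pre f c (x k) /\ (u \in phi k c) = (u \in psi k (x k)).
  move=> k; case E: (u \in psi k (x k)).
    by case/psiP: E => c [pc uc]; exists c; rewrite uc.
  exists (x k); split; first exact: pre_refl.
  by apply/negbTE/negP => ux; move: E; rewrite (subsetP (phi_psi k (x k)) u ux).
pose b := fun k => proj1_sig (constructive_indefinite_description _ (H k)).
have bP : forall k, pre f (b k) (x k) /\ (u \in phi k (b k)) = (u \in psi k (x k)).
  by move=> k; rewrite /b; case: constructive_indefinite_description.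
apply: (subsetP (chain fmono (y:=b) (fun k => proj1 (bP k)))).
rewrite feqn; rewrite (@leval_mem _ _ t _ (fun k => psi k (x k)) u) //.
by move=> k; case: (bP k).
Qed.
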